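(* Let $\Bbbk$ be a field of characteristic $0$, $n\ge2$, and let $(A,\mu)$ be an $n$-ary totally associative algebra over $\Bbbk$. Then $(A,[\cdot,\ldots,\cdot])$, where $[\cdot,\ldots,\cdot]$ is the $n$-commutator bracket of $\mu$, is an $n$-ary Nambu algebra, i.e. for all $x_1,\ldots,x_{n-1},y_1,\ldots,y_n\in A$, $[x_1,\ldots,x_{n-1},[y_1,\ldots,y_n]]=\sum_{i=1}^n[y_1,\ldots,y_{i-1},[x_1,\ldots,x_{n-1},y_i],y_{i+1},\ldots,y_n]$.
   Context: An $n$-ary algebra $(A,\mu)$ is a vector space with an $n$-linear map $\mu$, written $\mu(a_1,\ldots,a_n)=(a_1\cdots a_n)$. It is totally associative if for every $i\in\{1,\ldots,n-1\}$ and all $a_1,\ldots,a_{2n-1}$: $(a_1,\ldots,a_{i-1},(a_i\cdots a_{i+n-1}),a_{i+n},\ldots,a_{2n-1})=(a_1,\ldots,a_i,(a_{i+1}\cdots a_{i+n}),a_{i+n+1},\ldots,a_{2n-1})$. $n$-commutator words: in non-commuting variables $X_1,X_2,\ldots$, set $W_2=\{X_1X_2,-X_2X_1\}$ and for $n>2$, $W_n=\{zX_n,\,-X_nz : z\in W_{n-1}\}$. A word $w=\pm X_{i_1}\cdots X_{i_n}\in W_n$ acts by $w(a_1,\ldots,a_n)=\pm a_{i_1}\otimes\cdots\otimes a_{i_n}$. The $n$-commutator bracket is $[a_1,\ldots,a_n]=\sum_{w\in W_n}\mu(w(a_1,\ldots,a_n))$. *)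

(* Defs.v *)
From HB Require Import structures.
From mathcomp Require Import all_boot all_order all_algebra.
Set Implicit Arguments. Unset Strict Implicit. Unset Printing Implicit Defensive.
Import Order.TTheory GRing.Theory Num.Theory.
Local Open Scope ring_scope.

(* An n-ary operation on A is modelled as mu : seq A -> A, of which only the
   values on lists of length n are ever used. *)

Section Nary.
Variables (K : fieldType) (A : lmodType K).

Definition multilinear (n : nat) (mu : seq A -> A) : Prop :=
  forall (s1 s2 : seq A) (a : K) (x y : A),
    (size s1 + size s2).+1 = n ->
    mu (s1 ++ (a *: x + y) :: s2) = a *: mu (s1 ++ x :: s2) + mu (s1 ++ y :: s2).

Definition assoc_at (n : nat) (mu : seq A -> A) (j : nat) (s : seq A) : A :=
  mu (take j s ++ mu (take n (drop j s)) :: drop (j + n) s).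

(* total associativity: for i in {1,...,n-1} (here j = i-1, 0-indexed) *)
Definition totally_associative (n : nat) (mu : seq A -> A) : Prop :=
  forall s : seq A, size s = (2 * n).-1 ->
    forall j : nat, (j.+1 < n)%N -> assoc_at n mu j s = assoc_at n mu j.+1 s.

End Nary.

(* n-commutator words: (sign, indices), sign = true means minus; variables
   X_1, X_2, ... are represented by 0-based indices 0, 1, ... *)
Fixpoint cwords (m : nat) : seq (bool * seq nat) :=
  match m with
  | 0 => [::]
  | 1 => [::]
  | 2 => [:: (false, [:: 0%N; 1%N]); (true, [:: 1%N; 0%N])]
  | m'.+1 =>
      flatten [seq [:: (w.1, rcons w.2 m'); (~~ w.1, m' :: w.2)] | w <- cwords m']
  end.

Definition nbracket (K : fieldType) (A : lmodType K) (n : nat)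
    (mu : seq A -> A) (xs : seq A) : A :=
  \sum_(w <- cwords n) ((-1) ^+ w.1 : K) *: mu [seq nth 0 xs i | i <- w.2].

(* Main.v *)
Require Import Defs.
From HB Require Import structures.
From mathcomp Require Import all_boot all_order all_algebra.
From mathcomp Require Import boolp zify.
From Stdlib Require Import ProofIrrelevance FunctionalExtensionality.
Set Implicit Arguments. Unset Strict Implicit. Unset Printing Implicit Defensive.
Import Order.TTheory GRing.Theory Num.Theory.
Local Open Scope ring_scope.

Section LFring.
Variables (K : fieldType) (A : lmodType K).

Definition Fm := (seq A -> A) -> A.
Definition lin (f : Fm) := forall F G, f (fun u => F u + G u) = f F + f G.
Record LF := MkLF { lfun :> (seq A -> A) -> A; lfunP : lin lfun }.

Lemma LF_eq (f g : LF) : (forall F, f F = g F) -> f = g.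
Proof.
case: f g => f fP [g gP] /= H.
have E : f = g by apply: functional_extensionality.
subst g; congr MkLF; apply: proof_irrelevance.
Qed.

HB.instance Definition _ := gen_eqMixin LF.
HB.instance Definition _ := gen_choiceMixin LF.

Definition lzero : LF := @MkLF (fun _ => 0) (fun _ _ => esym (addr0 0)).
Lemma lopp_lin (f : LF) : lin (fun F => - f F).
Proof. by move=> F G; rewrite lfunP opprD. Qed.
Definition lopp (f : LF) : LF := MkLF (lopp_lin f).
Lemma ladd_lin (f g : LF) : lin (fun F => f F + g F).
Proof. by move=> F G; rewrite !lfunP addrACA. Qed.
Definition ladd (f g : LF) : LF := MkLF (ladd_lin f g).

Lemma laddA : associative ladd.
Proof. by move=> f g h; apply: LF_eq => F /=; rewrite addrA. Qed.
Lemma laddC : commutative ladd.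
Proof. by move=> f g; apply: LF_eq => F /=; rewrite addrC. Qed.
Lemma ladd0 : left_id lzero ladd.
Proof. by move=> f; apply: LF_eq => F /=; rewrite add0r. Qed.
Lemma laddN : left_inverse lzero lopp ladd.
Proof. by move=> f; apply: LF_eq => F /=; rewrite addNr. Qed.

HB.instance Definition _ := GRing.isZmodule.Build LF laddA laddC ladd0 laddN.

Lemma lone_lin : lin (fun F => F [::]). Proof. by []. Qed.
Definition lone : LF := MkLF lone_lin.
Lemma lmul_lin (f g : LF) : lin (fun F => f (fun u => g (fun v => F (u ++ v)))).
Proof.
move=> F G.
have -> : (fun u => g (fun v => F (u ++ v) + G (u ++ v))) =
          (fun u => (fun u => g (fun v => F (u ++ v))) u + (fun u => g (fun v => G (u ++ v))) u).
  by apply: functional_extensionality => u; rewrite lfunP.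
by rewrite lfunP.
Qed.
Definition lmul (f g : LF) : LF := MkLF (lmul_lin f g).

Lemma lmulA : associative lmul.
Proof.
move=> f g h; apply: LF_eq => F /=; congr (lfun f _).
apply: functional_extensionality => u; congr (lfun g _).
apply: functional_extensionality => v; congr (lfun h _).
by apply: functional_extensionality => w; rewrite catA.
Qed.
Lemma lmul1 : left_id lone lmul.
Proof. by move=> f; apply: LF_eq. Qed.
Lemma lmulr1 : right_id lone lmul.
Proof.
move=> f; apply: LF_eq => F /=; congr (lfun f _).
by apply: functional_extensionality => u; rewrite cats0.
Qed.
Lemma lmulDl : left_distributive lmul ladd.
Proof. by move=> f g h; apply: LF_eq. Qed.
Lemma lmulDr : right_distributive lmul ladd.
Proof.
move=> f g h; apply: LF_eq => F /=.
exact: (lfunP f (fun u => g (fun v => F (u ++ v))) (fun u => h (fun v => F (u ++ v)))).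
Qed.

HB.instance Definition _ := GRing.Zmodule_isPzRing.Build LF lmulA lmul1 lmulr1 lmulDl lmulDr.

Lemma addLE (f g : LF) F : (f + g) F = f F + g F. Proof. by []. Qed.
Lemma oppLE (f : LF) F : (- f) F = - f F. Proof. by []. Qed.
Lemma zeroLE F : (0 : LF) F = 0. Proof. by []. Qed.
Lemma oneLE F : (1 : LF) F = F [::]. Proof. by []. Qed.
Lemma mulLE (f g : LF) F : (f * g) F = f (fun u => g (fun v => F (u ++ v))). Proof. by []. Qed.
End LFring.

Lemma cwordsS m : (2 <= m)%N ->
  cwords m.+1 = flatten [seq [:: (w.1, rcons w.2 m); (~~ w.1, m :: w.2)] | w <- cwords m].
Proof. by case: m => [|[|m]]. Qed.

Lemma cwords_perm m w : (2 <= m)%N -> w \in cwords m -> perm_eq w.2 (iota 0 m).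
Proof.
elim: m w => [|m IH] w // Hm.
case: (ltnP m 2) => Hm2.
  have -> : m = 1%N by case: m Hm Hm2 IH => [|[|m]].
  by rewrite /= !inE => /orP [/eqP->|/eqP->].
rewrite cwordsS // => /flattenP [s /mapP [w0 Hw0 ->]].
have P0 := IH w0 Hm2 Hw0.
have -> : iota 0 m.+1 = rcons (iota 0 m) m by rewrite -addn1 iotaD cats1.
rewrite !inE => /orP [/eqP->|/eqP->] /=.
  by rewrite -!cats1 perm_cat2r.
by rewrite perm_sym perm_rcons perm_cons perm_sym.
Qed.

Lemma cwords_lt m w k : (2 <= m)%N -> w \in cwords m -> k \in w.2 -> (k < m)%N.
Proof. by move=> Hm Hw; rewrite (perm_mem (cwords_perm Hm Hw)) mem_iota. Qed.

Section Gen.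
Variable R : pzRingType.

Definition rbr m (fs : seq R) : R :=
  \sum_(w <- cwords m) (-1) ^+ w.1 * \prod_(k <- w.2) fs`_k.

Lemma rbr2 fs : rbr 2 fs = fs`_0 * fs`_1 - fs`_1 * fs`_0.
Proof.
by rewrite /rbr /= !big_cons !big_nil /= expr0 expr1 !mulr1 mul1r mulN1r addr0.
Qed.

Lemma rbr_rec m fs g : (2 <= m)%N -> size fs = m ->
  rbr m.+1 (rcons fs g) = rbr m fs * g - g * rbr m fs.
Proof.
move=> Hm Hs; rewrite /rbr cwordsS // big_flatten /= big_map.
rewrite mulr_suml mulr_sumr -sumrB; apply: eq_big_seq => w Hw.
rewrite !big_cons big_nil /= -cats1 big_cat /= big_seq1 addr0.
rewrite nth_rcons Hs ltnn eqxx.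
have -> : \prod_(k <- w.2) (rcons fs g)`_k = \prod_(k <- w.2) fs`_k.
  by apply: eq_big_seq => k Hk; rewrite nth_rcons Hs (cwords_lt Hm Hw Hk).
rewrite signrN mulNr; congr (_ - _); first by rewrite mulrA.
by rewrite [RHS]mulrA (commr_sign g) mulrA.
Qed.

Definition D (X a : R) := X * a - a * X.

Lemma Dmul X a b : D X (a * b) = D X a * b + a * D X b.
Proof. by rewrite /D mulrBl mulrBr !mulrA addrA subrK. Qed.

Lemma rearr (p q r s : R) : (p + q) - (r + s) = (p - s) + (q - r).
Proof. by rewrite opprD (addrC (- r)) addrACA. Qed.

Lemma rearr2 (p q r s : R) : (p - q) - (r - s) = (p - r) - (q - s).
Proof. by rewrite !opprB addrACA [RHS]addrACA (addrC (- q)). Qed.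

Lemma Dsub X a b : D X (a - b) = D X a - D X b.
Proof. by rewrite /D mulrBr mulrBl rearr2. Qed.

Lemma Dcomm X a b : D X (a * b - b * a) = (D X a * b - b * D X a) + (a * D X b - D X b * a).
Proof. by rewrite Dsub !Dmul rearr. Qed.

Lemma set_nth_rcons_lt (s : seq R) z i y : (i < size s)%N ->
  set_nth 0 (rcons s z) i y = rcons (set_nth 0 s i y) z.
Proof. by elim: s i => [|a s IH] [|i] //= H; rewrite IH. Qed.

Lemma set_nth_rcons_eq (s : seq R) z y : set_nth 0 (rcons s z) (size s) y = rcons s y.
Proof. by elim: s => [|a s IH] //=; rewrite IH. Qed.

Lemma rbr_deriv X m fs : (2 <= m)%N -> size fs = m ->
  D X (rbr m fs) = \sum_(i < m) rbr m (set_nth 0 fs i (D X fs`_i)).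
Proof.
elim: m fs => [|m IH] fs // Hm Hs.
case: (ltnP m 2) => Hm2.
  have m1 : m = 1%N by case: m Hm Hm2 IH Hs => [|[|m]].
  subst m; case: fs Hs => [|f [|g [|]]] // _.
  rewrite !big_ord_recr big_ord0 /= add0r !rbr2 /=.
  by rewrite Dcomm.
case/lastP: fs Hs => [|fs g] //; rewrite size_rcons => -[Hs].
rewrite rbr_rec // Dcomm IH // big_ord_recr /=.
rewrite mulr_suml mulr_sumr -sumrB; congr (_ + _).
  apply: eq_bigr => i _.
  have Hi : (i < size fs)%N by rewrite Hs.
  have Hi2 : (i < m)%N by [].
  move: Hi2; rewrite -{2}Hs => Hi2.
  rewrite nth_rcons Hi set_nth_rcons_lt // rbr_rec //.
  by rewrite size_set_nth Hs; apply/maxn_idPr.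
rewrite nth_rcons Hs ltnn eqxx.
have := set_nth_rcons_eq fs g (D X g); rewrite Hs => ->.
rewrite rbr_rec //.

Qed.
End Gen.

Lemma set_nth_rcons_lt' (T : Type) (x0 : T) (s : seq T) z i y : (i < size s)%N ->
  set_nth x0 (rcons s z) i y = rcons (set_nth x0 s i y) z.
Proof. by elim: s i => [|a s IH] [|i] //= H; rewrite IH. Qed.

Lemma set_nth_rcons_eq' (T : Type) (x0 : T) (s : seq T) z y :
  set_nth x0 (rcons s z) (size s) y = rcons s y.
Proof. by elim: s => [|a s IH] //=; rewrite IH. Qed.

Section Main.
Variables (K : fieldType) (A : lmodType K).

Lemma atom_lin (a : A) : lin (fun F => F [:: a]). Proof. by []. Qed.
Definition atom (a : A) : LF A := MkLF (atom_lin a).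
Lemma mulL (f g : LF A) F : (f * g) F = f (fun u => g (fun v => F (u ++ v))).
Proof. by []. Qed.

Lemma sumLE (I : Type) (r : seq I) (P : pred I) (f : I -> LF A) F :
  (\sum_(i <- r | P i) f i) F = \sum_(i <- r | P i) f i F.
Proof.
by apply: (big_morph (fun g : LF A => g F)) => [g h|].
Qed.

Lemma signLE (b : bool) (p : LF A) F : ((-1) ^+ b * p) F = ((-1) ^+ b : K) *: p F.
Proof. by case: b; rewrite ?expr0 ?expr1 ?mul1r ?scale1r ?mulN1r ?scaleN1r. Qed.

Lemma prod_atoms P F : (\prod_(g <- map atom P) g) F = F P.
Proof.
elim: P F => [|a P IH] F; first by rewrite big_nil.
by rewrite /= big_cons mulL /= IH.
Qed.

Lemma prod_plug P Q (Z : LF A) F :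
  (\prod_(g <- map atom P ++ Z :: map atom Q) g) F = Z (fun v => F (P ++ v ++ Q)).
Proof.
rewrite big_cat big_cons /= prod_atoms; congr (lfun Z _).
by apply: functional_extensionality => u; rewrite prod_atoms.
Qed.

Lemma rbr_atoms m (zs : seq A) F : (2 <= m)%N -> size zs = m ->
  rbr m (map atom zs) F =
  \sum_(w <- cwords m) ((-1) ^+ w.1 : K) *: F [seq zs`_i | i <- w.2].
Proof.
move=> Hm Hs; rewrite /rbr sumLE; apply: eq_big_seq => w Hw.
rewrite signLE; congr (_ *: _).
have -> : \prod_(k <- w.2) (map atom zs)`_k =
          \prod_(g <- map atom [seq zs`_i | i <- w.2]) g.
  rewrite !big_map; apply: eq_big_seq => k Hk.
  by rewrite (nth_map 0) // Hs (cwords_lt Hm Hw Hk).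
by rewrite prod_atoms.
Qed.

Lemma exX n' (xs : seq A) : (2 <= n')%N -> size xs = n'.-1 ->
  exists X : LF A, forall g, rbr n' (rcons (map atom xs) g) = D X g.
Proof.
case: n' => [|[|[|m]]] // _ Hs.
  by case: xs Hs => [|x [|]] // _; exists (atom x) => g; rewrite rbr2.
by exists (rbr m.+2 (map atom xs)) => g; rewrite rbr_rec // size_map.
Qed.

Variables (n : nat) (mu : seq A -> A).
Hypotheses (Hn : (2 <= n)%N) (ml : multilinear n mu) (ta : totally_associative n mu).

Definition E (s : seq A) := mu (mu (take n s) :: drop n s).

Lemma ml_sum (T : Type) (l : seq T) (c : T -> K) (v : T -> A) P Q :
  (size P + size Q).+1 = n ->
  mu (P ++ (\sum_(p <- l) c p *: v p) :: Q) = \sum_(p <- l) c p *: mu (P ++ v p :: Q).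
Proof.
move=> HPQ; elim: l => [|a l IH].
  rewrite !big_nil.
  have := @ml P Q 1 0 0 HPQ; rewrite scaler0 addr0 scale1r => h.
  by apply: (@addrI _ (mu (P ++ 0 :: Q))); rewrite addr0 -h.
by rewrite !big_cons (@ml P Q) // IH.
Qed.

Lemma assoc_j s j : size s = (2 * n).-1 -> (j < n)%N ->
  assoc_at n mu j s = assoc_at n mu 0 s.
Proof.
move=> Hs; elim: j => [|j IH] // Hj.
by rewrite -(@ta s Hs j) // IH // ltnW.
Qed.

Lemma assocE P v Q : (size P + size Q).+1 = n -> size v = n ->
  mu (P ++ mu v :: Q) = E (P ++ v ++ Q).
Proof.
move=> HPQ Hv.
have Hs : size (P ++ v ++ Q) = (2 * n).-1.
  by rewrite !size_cat Hv -HPQ; rewrite mul2n -addnn; lia.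
have HP : (size P < n)%N by rewrite -HPQ; lia.
rewrite /E; have := assoc_j Hs HP; rewrite /assoc_at take0 drop0 add0n /= => <-.
rewrite take_size_cat // drop_size_cat // take_size_cat //.
by rewrite (addnC (size P)) -drop_drop drop_size_cat // -Hv drop_size_cat.
Qed.

Lemma map_set_nth_notin (zs : seq A) i C (s : seq nat) : i \notin s ->
  [seq (set_nth 0 zs i C)`_k | k <- s] = [seq zs`_k | k <- s].
Proof.
move=> Hi; apply/eq_in_map => k Hk; rewrite nth_set_nth /=.
by case: eqP => // Hki; move: Hi; rewrite -Hki Hk.
Qed.

Lemma map_set_nth_notin' (zs : seq A) i (Z : LF A) (s : seq nat) : i \notin s ->
  (forall k, k \in s -> (k < size zs)%N) ->
  [seq (set_nth 0 (map atom zs) i Z)`_k | k <- s] = map atom [seq zs`_k | k <- s].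
Proof.
move=> Hi Hs; rewrite -map_comp; apply/eq_in_map => k Hk; rewrite nth_set_nth /=.
case: eqP => [Hki|_]; first by move: Hi; rewrite -Hki Hk.
by rewrite (nth_map 0) // Hs.
Qed.

Lemma plug (zs : seq A) i C (Z : LF A) (l : seq (K * seq A)) :
  size zs = n -> (i < n)%N ->
  (forall p, p \in l -> size p.2 = n) ->
  C = \sum_(p <- l) p.1 *: mu p.2 ->
  (forall F, Z F = \sum_(p <- l) p.1 *: F p.2) ->
  nbracket n mu (set_nth 0 zs i C) = rbr n (set_nth 0 (map atom zs) i Z) E.
Proof.
move=> Hs Hi Hl HC HZ.
rewrite /nbracket /rbr sumLE; apply: eq_big_seq => w Hw; rewrite signLE; congr (_ *: _).
have Hp := cwords_perm Hn Hw.
have Hiw : i \in w.2 by rewrite (perm_mem Hp) mem_iota.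
move: (w.2) Hp Hiw => s Hp Hiw.
case/splitPr: Hiw Hp => p q Hp.
have Hu : uniq (p ++ i :: q) by rewrite (perm_uniq Hp) iota_uniq.
have Hsz : size (p ++ i :: q) = n by rewrite (perm_size Hp) size_iota.
have Hlt : forall k, k \in p ++ i :: q -> (k < size zs)%N.
  by move=> k; rewrite (perm_mem Hp) mem_iota Hs.
move: Hu; rewrite cat_uniq => /and3P [_ Hhas /andP [Hiq _]].
have Hip : i \notin p.
  by apply: contra Hhas => H; apply/hasP; exists i => //; rewrite inE eqxx.
rewrite map_cat /= map_set_nth_notin // map_set_nth_notin //.
rewrite nth_set_nth /= eqxx.
have -> : \prod_(k <- p ++ i :: q) (set_nth 0 (map atom zs) i Z)`_k =
  \prod_(g <- [seq (set_nth 0 (map atom zs) i Z)`_k | k <- p ++ i :: q]) g.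
  by rewrite big_map.
rewrite map_cat /= map_set_nth_notin' //; last first.
  by move=> k Hk; apply: Hlt; rewrite mem_cat Hk.
rewrite map_set_nth_notin' //; last first.
  by move=> k Hk; apply: Hlt; rewrite mem_cat in_cons Hk !orbT.
rewrite nth_set_nth /= eqxx prod_plug HZ HC.
have HPQ : (size [seq zs`_k | k <- p] + size [seq zs`_k | k <- q]).+1 = n.
  by rewrite !size_map -Hsz size_cat /= addnS.
rewrite ml_sum //; apply: eq_big_seq => x Hx.
by rewrite assocE // Hl.
Qed.
End Main.

Theorem corollary4p6 (K : fieldType) (A : lmodType K) (n : nat)
    (mu : seq A -> A) :
  [pchar K] =i pred0 ->
  (2 <= n)%N ->
  multilinear n mu ->
  totally_associative n mu ->
  forall xs ys : seq A, size xs = n.-1 -> size ys = n ->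
    nbracket n mu (rcons xs (nbracket n mu ys)) =
    \sum_(i < n) nbracket n mu
        (set_nth 0 ys i (nbracket n mu (rcons xs (nth 0 ys i)))).
Proof.
move=> _ Hn ml ta xs ys Hx Hy.
have [X HX] := exX (xs := xs) Hn Hx.
have Hsz : forall zs : seq A, size zs = n -> forall p, p \in
    [seq (((-1) ^+ (w.1 : bool) : K), [seq zs`_k | k <- w.2]) | w <- cwords n] -> size p.2 = n.
  move=> zs _ p /mapP [w Hw ->] /=.
  by rewrite size_map (perm_size (cwords_perm Hn Hw)) size_iota.
have Hn1 : n.-1.+1 = n by rewrite prednK // ltnW.
have Hrx : size (rcons xs (0:A)) = n by rewrite size_rcons Hx.
have -> : rcons xs (nbracket n mu ys) = set_nth 0 (rcons xs 0) n.-1 (nbracket n mu ys).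
  by rewrite -Hx set_nth_rcons_eq'.
rewrite (plug Hn ml ta (zs := rcons xs 0) (i := n.-1) (Z := rbr n (map (@atom K A) ys))
   (l := [seq (((-1) ^+ (w.1 : bool) : K), [seq ys`_k | k <- w.2]) | w <- cwords n])) //;
  last first.
- by move=> F; rewrite rbr_atoms // big_map.
- by rewrite big_map.
- exact: Hsz.
- by rewrite -{2}Hn1.
rewrite map_rcons -Hx -(size_map (@atom K A) xs) set_nth_rcons_eq' HX rbr_deriv ?size_map //.
rewrite sumLE; apply: eq_bigr => i _; symmetry.
rewrite (nth_map 0) ?Hy // -HX -map_rcons.
have Hry : size (rcons xs ys`_i) = n by rewrite size_rcons Hx.
apply: (plug Hn ml ta (l := [seq (((-1) ^+ (w.1 : bool) : K), [seq (rcons xs ys`_i)`_k | k <- w.2]) | w <- cwords n])) => //.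
- exact: Hsz.
- by rewrite big_map.
- by move=> F; rewrite rbr_atoms // big_map.
Qed.
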